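(* Let $N\ge 4$ and $\bm X^{(N)} := (1+\frac{1}{N-1})\bm I_N - \frac{1}{N-1}\bm 1\bm 1^\top$. Define $\bm Y^{(N)}\in\mathbb{R}^{N^2\times N^2}$ by $$Y^{(N)}_{(ij)(k\ell)} = \begin{cases} 1 & |\mathsf{odd}((ijk\ell))| = 0,\\ -\frac{1}{N-1} & |\mathsf{odd}((ijk\ell))| = 2,\\ \frac{3}{(N-1)(N-3)} & |\mathsf{odd}((ijk\ell))| = 4.\end{cases}$$ Then $\bm Y^{(N)}$ is a degree 4 pseudomoment matrix extending $\bm X^{(N)}$.
   Context: For a string $(ijk\ell)$ of symbols from $[N]$, $\mathsf{odd}((ijk\ell))$ is the set of symbols occurring an odd number of times in it (its size is always $0$, $2$ or $4$). A degree 4 pseudomoment matrix is a matrix $\bm Y \in \mathbb{R}^{N^2\times N^2}$, rows and columns indexed by pairs $(ij)\in[N]^2$ (lexicographically ordered), such that: (1) $\bm Y\succeq 0$; (2) $Y_{(ij)(kk)}$ does not depend on $k$; (3) $Y_{(ii)(ii)} = 1$ for all $i$; (4) $Y_{(ij)(k\ell)}$ is invariant under all permutations of the four indices $i,j,k,\ell$. Such $\bm Y$ extends $\bm X\in\mathbb{R}^{N\times N}_{\mathrm{sym}}$ if $Y_{(1i)(1j)} = X_{ij}$ for all $i,j$. *)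

(* Defs.v *)
From HB Require Import structures.
From mathcomp Require Import all_boot all_order all_algebra all_fingroup.
Set Implicit Arguments. Unset Strict Implicit. Unset Printing Implicit Defensive.
Import Order.TTheory GRing.Theory Num.Theory.
Local Open Scope ring_scope.

Definition psdmx (R : realFieldType) (n : nat) (A : 'M[R]_n) : Prop :=
  A^T = A /\ forall v : 'cV[R]_n, 0 <= (v^T *m A *m v) 0 0.

Lemma pidx_proof (N : nat) (i j : 'I_N) : (i * N + j < N * N)%N.
Proof.
have := ltn_ord i; have := ltn_ord j => hj hi.
apply: (@leq_trans (i * N + N)); first by rewrite ltn_add2l.
by rewrite -mulSnr leq_mul2r hi orbT.
Qed.

Definition pidx (N : nat) (i j : 'I_N) : 'I_(N * N) := Ordinal (pidx_proof i j).

Definition Yent (R : realFieldType) (N : nat) (Y : 'M[R]_(N * N))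
  (i j k l : 'I_N) : R := Y (pidx i j) (pidx k l).

Definition odd_size (s : seq nat) : nat :=
  size [seq x <- undup s | odd (count_mem x s)].

Definition o0 : 'I_4 := @Ordinal 4 0 isT.
Definition o1 : 'I_4 := @Ordinal 4 1 isT.
Definition o2 : 'I_4 := @Ordinal 4 2 isT.
Definition o3 : 'I_4 := @Ordinal 4 3 isT.

Definition pseudomoment4 (R : realFieldType) (N : nat) (Y : 'M[R]_(N * N)) : Prop :=
  [/\ psdmx Y,
      (forall i j k k' : 'I_N, Yent Y i j k k = Yent Y i j k' k'),
      (forall i : 'I_N, Yent Y i i i i = 1) &
      (forall (f : 'I_4 -> 'I_N) (s : 'S_4),
          Yent Y (f (s o0)) (f (s o1)) (f (s o2)) (f (s o3))
          = Yent Y (f o0) (f o1) (f o2) (f o3))].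

(* Y extends X: Y_{(1i)(1j)} = X_{ij}, where 1 is the first index *)
Definition extends (R : realFieldType) (N : nat) (Y : 'M[R]_(N * N)) (X : 'M[R]_N) : Prop :=
  forall (o : 'I_N), nat_of_ord o = 0%N -> forall i j : 'I_N, Yent Y o i o j = X i j.

Definition Xmat (R : realFieldType) (N : nat) : 'M[R]_N :=
  \matrix_(i < N, j < N)
    ((1 + 1 / (N - 1)%:R) * (i == j)%:R - 1 / (N - 1)%:R).

Definition Yval (R : realFieldType) (N : nat) (i j k l : nat) : R :=
  match odd_size [:: i; j; k; l] with
  | 0%N => 1
  | 2%N => - (1 / (N - 1)%:R)
  | 4%N => 3 / ((N - 1)%:R * (N - 3)%:R)
  | _ => 0
  end.

Definition Ymat (R : realFieldType) (N : nat) : 'M[R]_(N * N) :=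
  \matrix_(a < N * N, b < N * N)
    Yval R N (a %/ N) (a %% N) (b %/ N) (b %% N).

(* Main.v *)
Require Import Defs.
From HB Require Import structures.
From mathcomp Require Import all_boot all_order all_algebra all_fingroup.
From mathcomp Require Import ring lra.
Set Implicit Arguments. Unset Strict Implicit. Unset Printing Implicit Defensive.
Import Order.TTheory GRing.Theory Num.Theory.
Local Open Scope ring_scope.


Lemma odd_size_U (s U : seq nat) : uniq U -> {subset s <= U} ->
  odd_size s = size [seq x <- U | odd (count_mem x s)].
Proof.
move=> uU sU; rewrite /odd_size; apply: perm_size; apply: uniq_perm.
- by rewrite filter_uniq // undup_uniq.
- by rewrite filter_uniq.
move=> x; rewrite !mem_filter mem_undup.
case Ox: (odd (count_mem x s)) => //=.
have xs : x \in s.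
  by rewrite -has_pred1 has_count; move: Ox; case: (count _ _).
by rewrite xs sU.
Qed.

Lemma odd_size_perm (s t : seq nat) : perm_eq s t -> odd_size s = odd_size t.
Proof.
move=> pst; rewrite (@odd_size_U s (undup s)) ?undup_uniq //; last by move=> x; rewrite mem_undup.
rewrite (@odd_size_U t (undup s)) ?undup_uniq //; last by move=> x; rewrite mem_undup (perm_mem pst).
by congr size; apply: eq_filter => x; rewrite (seq.permP pst).
Qed.

Lemma odd_size_kk (i j k k' : nat) : odd_size [:: i; j; k; k] = odd_size [:: i; j; k'; k'].
Proof.
pose U := undup [:: i; j; k; k'].
rewrite (@odd_size_U _ U) ?undup_uniq //; last by move=> x; rewrite mem_undup !inE => /or4P[]/eqP->; rewrite ?eqxx ?orbT.
rewrite (@odd_size_U _ U) ?undup_uniq //; last by move=> x; rewrite mem_undup !inE => /or4P[]/eqP->; rewrite ?eqxx ?orbT.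
congr size; apply: eq_filter => x /=.
by rewrite !addn0 !oddD addbb addbA addbb !addbF.
Qed.

Ltac cs x y := case: (eqVneq x y); [let E := fresh in intro E; (match goal with |- context[x] => try rewrite -E | _ => idtac end); clear E | intro].
Ltac fixneq := repeat match goal with H : is_true (?a != ?b) |- _ =>
  move: (negbTE H); rewrite eq_sym in H; move: (negbTE H); clear H; move=> ? ? end.
Ltac rwf := repeat match goal with H : (?a == ?b) = false |- context[?a == ?b] => rewrite H end.
Ltac simp := do 4 (rewrite ?inE ?eqxx; rwf; try rewrite [size _]/=).

Section Main.
Variable R : realFieldType.
Variable N : nat.

Definition dl (i j : nat) : R := (i == j)%:R.
Definition ca : R := - (1 / (N - 1)%:R).
Definition cb : R := 3 / ((N - 1)%:R * (N - 3)%:R).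
Definition ydelta (i j k l : nat) : R :=
  cb + (ca - cb) * (dl i j + dl i k + dl i l + dl j k + dl j l + dl k l)
  + (1 - 2 * ca + cb) * (dl i j * dl k l + dl i k * dl j l + dl i l * dl j k)
  + (2 * (cb - ca)) * (dl i j * dl i k + dl i j * dl i l + dl i k * dl i l + dl j k * dl j l)
  + (-2 - 6 * cb + 8 * ca) * (dl i j * dl i k * dl i l).

Lemma Yval_delta (i j k l : nat) : Yval R N i j k l = ydelta i j k l.
Proof.
rewrite /Yval.
cs i j; cs i k; cs i l; cs j k; cs j l; cs k l.
all: fixneq.
all: rewrite /odd_size /ydelta /dl.
all: simp.
all: rewrite [LHS]/= /ca /cb ?mulr1n ?mulr0n.
all: ring.
Qed.

Lemma Yval_zz (z a b : nat) : Yval R N z a z b = if a == b then 1 else ca.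
Proof.
rewrite /Yval /ca.
cs z a; cs z b; cs a b.
all: fixneq.
all: rewrite /odd_size.
all: simp.
all: by rewrite [LHS]/=.
Qed.

Lemma Yval_perm (a b c d a' b' c' d' : nat) :
  perm_eq [:: a; b; c; d] [:: a'; b'; c'; d'] -> Yval R N a b c d = Yval R N a' b' c' d'.
Proof. by move=> p; rewrite /Yval (odd_size_perm p). Qed.

Lemma pidx_div (i j : 'I_N) : ((pidx i j) %/ N)%N = i.
Proof.
have N0 : (0 < N)%N by apply: leq_ltn_trans (ltn_ord i).
by rewrite /= divnMDl // divn_small ?addn0.
Qed.

Lemma pidx_mod (i j : 'I_N) : ((pidx i j) %% N)%N = j.
Proof. by rewrite /= modnMDl modn_small. Qed.

Lemma Yent_val (i j k l : 'I_N) : Yent (Ymat R N) i j k l = Yval R N i j k l.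
Proof. by rewrite /Yent mxE !pidx_div !pidx_mod. Qed.

End Main.


Lemma memL (x : 'I_4) : x \in [:: o0; o1; o2; o3].
Proof. by case: x => [[|[|[|[|n]]]] hn]. Qed.

Lemma permL (s : 'S_4) : perm_eq [:: s o0; s o1; s o2; s o3] [:: o0; o1; o2; o3].
Proof.
apply: uniq_perm => //.
  by rewrite (_ : [:: s o0; s o1; s o2; s o3] = map s [:: o0; o1; o2; o3]) // (map_inj_uniq (@perm_inj _ s)).
move=> x; rewrite memL.
have -> : x = s ((s^-1)%g x) by rewrite permKV.
rewrite (_ : [:: s o0; s o1; s o2; s o3] = map s [:: o0; o1; o2; o3]) //.
by rewrite mem_map ?memL //; apply: perm_inj.
Qed.

Lemma permLN (N : nat) (f : 'I_4 -> 'I_N) (s : 'S_4) :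
  perm_eq [:: nat_of_ord (f (s o0)); nat_of_ord (f (s o1)); nat_of_ord (f (s o2)); nat_of_ord (f (s o3))]
          [:: nat_of_ord (f o0); nat_of_ord (f o1); nat_of_ord (f o2); nat_of_ord (f o3)].
Proof.
have := perm_map (fun x => nat_of_ord (f x)) (permL s).
by [].
Qed.


Section Q.
Variable R : realFieldType.
Variable N : nat.
Hypothesis N0 : (0 < N)%N.

Lemma divo_proof (a : 'I_(N * N)) : (a %/ N < N)%N.
Proof. by rewrite ltn_divLR // ltn_ord. Qed.
Definition divo (a : 'I_(N * N)) : 'I_N := Ordinal (divo_proof a).
Definition modo (a : 'I_(N * N)) : 'I_N := Ordinal (ltn_pmod a N0).

Lemma sum_pidx (F : 'I_(N * N) -> R) :
  \sum_a F a = \sum_i \sum_j F (pidx i j).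
Proof.
rewrite pair_big /=.
rewrite (reindex (fun p : 'I_N * 'I_N => pidx p.1 p.2)) //=.
apply: onW_bij; exists (fun a => (divo a, modo a)).
  move=> [i j] /=; congr pair; apply: val_inj => /=; [exact: pidx_div | exact: pidx_mod].
by move=> a; apply: val_inj => /=; rewrite -divn_eq.
Qed.

Definition S4 (F : 'I_N -> 'I_N -> 'I_N -> 'I_N -> R) :=
  \sum_i \sum_j \sum_k \sum_l F i j k l.

Lemma S4ext F G : (forall i j k l, F i j k l = G i j k l) -> S4 F = S4 G.
Proof.
by move=> e; apply: eq_bigr => i _; apply: eq_bigr => j _; apply: eq_bigr => k _;
  apply: eq_bigr => l _.
Qed.

Lemma S4D F G : S4 (fun i j k l => F i j k l + G i j k l) = S4 F + S4 G.
Proof.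
rewrite /S4 -big_split; apply: eq_bigr => i _; rewrite -big_split;
apply: eq_bigr => j _; rewrite -big_split; apply: eq_bigr => k _; by rewrite -big_split.
Qed.

Lemma S4Z c F : S4 (fun i j k l => c * F i j k l) = c * S4 F.
Proof.
rewrite /S4 mulr_sumr; apply: eq_bigr => i _; rewrite mulr_sumr;
apply: eq_bigr => j _; rewrite mulr_sumr; apply: eq_bigr => k _; by rewrite mulr_sumr.
Qed.

Lemma S4sw12 F : S4 F = S4 (fun i j k l => F j i k l).
Proof. by rewrite /S4 exchange_big. Qed.

Lemma S4sw34 F : S4 F = S4 (fun i j k l => F i j l k).
Proof. by apply: eq_bigr => i _; apply: eq_bigr => j _; rewrite exchange_big. Qed.

Lemma S4swP F : S4 F = S4 (fun i j k l => F k l i j).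
Proof.
rewrite /S4.
transitivity (\sum_i \sum_k \sum_j \sum_l F i j k l).
  by apply: eq_bigr => i _; rewrite exchange_big.
transitivity (\sum_i \sum_k \sum_l \sum_j F i j k l).
  by apply: eq_bigr => i _; apply: eq_bigr => k _; rewrite exchange_big.
rewrite exchange_big; apply: eq_bigr => k _.
by rewrite exchange_big.
Qed.

Definition Vof (v : 'cV[R]_(N * N)) (i j : 'I_N) := v (pidx i j) 0.

Lemma quad_S4 (v : 'cV[R]_(N * N)) :
  (v^T *m Ymat R N *m v) 0 0 =
  S4 (fun i j k l => Vof v i j * Vof v k l * Yval R N i j k l).
Proof.
rewrite mxE.
under eq_bigr do rewrite mxE mulr_suml.
rewrite exchange_big sum_pidx; apply: eq_bigr => i _; apply: eq_bigr => j _.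
rewrite sum_pidx; apply: eq_bigr => k _; apply: eq_bigr => l _.
by rewrite !mxE !pidx_div !pidx_mod /Vof; ring.
Qed.


Lemma symmetrize (V : 'I_N -> 'I_N -> R) (y : 'I_N -> 'I_N -> 'I_N -> 'I_N -> R) :
  (forall i j k l, y i j k l = y j i k l) -> (forall i j k l, y i j k l = y i j l k) ->
  S4 (fun i j k l => V i j * V k l * y i j k l) =
  S4 (fun i j k l => ((V i j + V j i) / 2) * ((V k l + V l k) / 2) * y i j k l).
Proof.
move=> y12 y34.
set A := S4 _.
rewrite (@S4ext _ (fun i j k l => (2^-1 * 2^-1) * ((V i j * V k l * y i j k l + V j i * V k l * y i j k l) + (V i j * V l k * y i j k l + V j i * V l k * y i j k l)))); last by move=> i j k l; ring.
rewrite S4Z !S4D.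
have e1 : S4 (fun i j k l => V j i * V k l * y i j k l) = A.
  by rewrite S4sw12; apply: S4ext => i j k l; rewrite y12.
have e2 : S4 (fun i j k l => V i j * V l k * y i j k l) = A.
  by rewrite S4sw34; apply: S4ext => i j k l; rewrite y34.
have e3 : S4 (fun i j k l => V j i * V l k * y i j k l) = A.
  by rewrite S4sw12 S4sw34; apply: S4ext => i j k l; rewrite y34 y12.
rewrite e1 e2 e3 -/A.
have h2 : (2 : R) != 0 by rewrite pnatr_eq0.
by field.
Qed.

Lemma sum_dl (i : 'I_N) (f : 'I_N -> R) : \sum_(k < N) dl R i k * f k = f i.
Proof.
rewrite (bigD1 i) //= /dl eqxx mul1r big1 ?addr0 // => k hk.
by rewrite eq_sym in hk; rewrite (_ : (nat_of_ord i == k) = false) ?mul0r //; exact: negbTE hk.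
Qed.

Section Terms.
Variable W : 'I_N -> 'I_N -> R.
Hypothesis Wsym : forall i j, W i j = W j i.
Definition T (g : 'I_N -> 'I_N -> 'I_N -> 'I_N -> R) :=
  S4 (fun i j k l => W i j * W k l * g i j k l).
Definition rr i := \sum_j W i j.
Definition dd i := W i i.
Definition ss := \sum_i rr i.
Definition tt := \sum_i dd i.
Definition F2 := \sum_i \sum_j W i j ^+ 2.
Definition A1 := \sum_i rr i ^+ 2.
Definition A2 := \sum_i dd i * rr i.
Definition A3 := \sum_i dd i ^+ 2.

Lemma T_D F G : T (fun i j k l => F i j k l + G i j k l) = T F + T G.
Proof. by rewrite /T -S4D; apply: S4ext => *; ring. Qed.
Lemma T_Z c F : T (fun i j k l => c * F i j k l) = c * T F.
Proof. by rewrite /T -S4Z; apply: S4ext => *; ring. Qed.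
Lemma T_sw12 F : T F = T (fun i j k l => F j i k l).
Proof. by rewrite /T S4sw12; apply: S4ext => *; rewrite Wsym. Qed.
Lemma T_sw34 F : T F = T (fun i j k l => F i j l k).
Proof. by rewrite /T S4sw34; apply: S4ext => i j k l; rewrite (Wsym l). Qed.
Lemma T_swP F : T F = T (fun i j k l => F k l i j).
Proof. by rewrite /T S4swP; apply: S4ext => *; ring. Qed.
Lemma T_ext F G : (forall i j k l, F i j k l = G i j k l) -> T F = T G.
Proof. by move=> e; rewrite /T; apply: S4ext => *; rewrite e. Qed.

Lemma T1 : T (fun _ _ _ _ => 1) = ss ^+ 2.
Proof.
rewrite /T /S4 expr2 /ss mulr_suml; apply: eq_bigr => i _.
rewrite /rr mulr_suml; apply: eq_bigr => j _.
rewrite mulr_sumr; apply: eq_bigr => k _.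
rewrite mulr_sumr; apply: eq_bigr => l _.
by rewrite mulr1.
Qed.

Lemma Tij : T (fun i j _ _ => dl R i j) = tt * ss.
Proof.
rewrite /T /S4 /tt mulr_suml; apply: eq_bigr => i _.
rewrite (eq_bigr (fun j : 'I_N => dl R i j * (W i j * ss))); last first.
  move=> j _; rewrite /ss mulr_sumr mulr_sumr; apply: eq_bigr => k _.
  rewrite /rr mulr_sumr mulr_sumr; apply: eq_bigr => l _; ring.
by rewrite sum_dl.
Qed.

Lemma Tik : T (fun i _ k _ => dl R i k) = A1.
Proof.
rewrite /T /S4 /A1; apply: eq_bigr => i _.
rewrite (eq_bigr (fun j : 'I_N => W i j * rr i)); last first.
  move=> j _.
  rewrite (eq_bigr (fun k : 'I_N => dl R i k * (W i j * rr k))); last first.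
    move=> k _; rewrite /rr mulr_sumr mulr_sumr; apply: eq_bigr => l _; ring.
  by rewrite sum_dl.
by rewrite -mulr_suml expr2.
Qed.

Lemma TijKl : T (fun i j k l => dl R i j * dl R k l) = tt ^+ 2.
Proof.
rewrite /T /S4 expr2 {1}/tt mulr_suml; apply: eq_bigr => i _.
rewrite (eq_bigr (fun j : 'I_N => dl R i j * (W i j * tt))); last first.
  move=> j _; rewrite /tt mulr_sumr mulr_sumr; apply: eq_bigr => k _.
  rewrite (eq_bigr (fun l : 'I_N => dl R k l * (W i j * W k l * dl R i j))); last by move=> l _; ring.
  by rewrite sum_dl /dd; ring.
by rewrite sum_dl.
Qed.

Lemma TikJl : T (fun i j k l => dl R i k * dl R j l) = F2.
Proof.
rewrite /T /S4 /F2; apply: eq_bigr => i _; apply: eq_bigr => j _.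
rewrite (eq_bigr (fun k : 'I_N => dl R i k * (W i j * W k j))); last first.
  move=> k _.
  rewrite (eq_bigr (fun l : 'I_N => dl R j l * (W i j * W k l * dl R i k))); last by move=> l _; ring.
  by rewrite sum_dl; ring.
by rewrite sum_dl expr2.
Qed.

Lemma TijIk : T (fun i j k l => dl R i j * dl R i k) = A2.
Proof.
rewrite /T /S4 /A2; apply: eq_bigr => i _.
rewrite (eq_bigr (fun j : 'I_N => dl R i j * (W i j * rr i))); last first.
  move=> j _.
  rewrite (eq_bigr (fun k : 'I_N => dl R i k * (dl R i j * W i j * rr k))); last first.
    move=> k _; rewrite /rr mulr_sumr mulr_sumr; apply: eq_bigr => l _; ring.
  by rewrite sum_dl; ring.
by rewrite sum_dl.
Qed.

Lemma TijIkIl : T (fun i j k l => dl R i j * dl R i k * dl R i l) = A3.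
Proof.
rewrite /T /S4 /A3; apply: eq_bigr => i _.
rewrite (eq_bigr (fun j : 'I_N => dl R i j * (W i j * W i i))); last first.
  move=> j _.
  rewrite (eq_bigr (fun k : 'I_N => dl R i k * (dl R i j * W i j * W k i))); last first.
    move=> k _.
    rewrite (eq_bigr (fun l : 'I_N => dl R i l * (dl R i j * dl R i k * W i j * W k l))); last by move=> l _; ring.
    by rewrite sum_dl; ring.
  by rewrite sum_dl; ring.
by rewrite sum_dl /dd expr2.
Qed.

Lemma T_C c : T (fun _ _ _ _ => c) = c * ss ^+ 2.
Proof. by rewrite -T1 -T_Z; apply: T_ext => *; rewrite mulr1. Qed.

Lemma dl_tri (a b c : nat) : dl R c a * dl R c b = dl R a b * dl R a c.
Proof.
rewrite /dl.
have [E1|h1] := eqVneq c a; have [E2|h2] := eqVneq a b; subst; rewrite ?eqxx //.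
all: try rewrite (negbTE h2).
all: by rewrite ?mulr0n ?mulr1n ?mul0r ?mulr0.
Qed.

Lemma T_ydelta : T (fun i j k l => ydelta R N i j k l) =
  cb R N * ss ^+ 2 + (ca R N - cb R N) * (2 * tt * ss + 4 * A1)
  + (1 - 2 * ca R N + cb R N) * (tt ^+ 2 + 2 * F2)
  + 2 * (cb R N - ca R N) * (4 * A2) + (-2 - 6 * cb R N + 8 * ca R N) * A3.
Proof.
rewrite /ydelta.
rewrite !T_D !T_Z !T_D T_C.
have Tkl : T (fun _ _ k l => dl R k l) = tt * ss by rewrite T_swP Tij.
have Til : T (fun i _ _ l => dl R i l) = A1 by rewrite T_sw34 Tik.
have Tjk : T (fun _ j k _ => dl R j k) = A1 by rewrite T_sw12 Tik.
have Tjl : T (fun _ j _ l => dl R j l) = A1 by rewrite T_sw12 T_sw34 Tik.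
have TilJk : T (fun i j k l => dl R i l * dl R j k) = F2 by rewrite T_sw34 TikJl.
have TijIl : T (fun i j k l => dl R i j * dl R i l) = A2 by rewrite T_sw34 TijIk.
have TikIl : T (fun i j k l => dl R i k * dl R i l) = A2.
  by rewrite T_swP -TijIk; apply: T_ext => i j k l; rewrite dl_tri.
have TjkJl : T (fun i j k l => dl R j k * dl R j l) = A2 by rewrite T_sw12 TikIl.
rewrite Tij Tik TijKl TikJl TijIk TijIkIl Tkl Til Tjk Tjl TilJk TijIl TikIl TjkJl.
rewrite /cb; ring.
Qed.

Lemma sum_cst (c : R) : \sum_(j < N) c = N%:R * c.
Proof. by rewrite sumr_const card_ord mulr_natl. Qed.

Definition m1 : R := N%:R - 1.
Definition m2 : R := (N%:R - 1) * (N%:R - 2).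
Definition uu := ss - tt.
Definition pp i := m1 * (rr i - dd i) - uu / 2.
Definition GG := \sum_i \sum_j (m2 * W i j - pp i - pp j) ^+ 2.
Definition DD := \sum_i (m2 * dd i - 2 * pp i) ^+ 2.

Lemma GD_ge0 : 0 <= GG - DD.
Proof.
rewrite /GG /DD -sumrB; apply: sumr_ge0 => i _.
rewrite (bigD1 i) //=.
have -> : (m2 * W i i - pp i - pp i) ^+ 2 = (m2 * dd i - 2 * pp i) ^+ 2 by rewrite /dd; ring.
rewrite addrC addrK; apply: sumr_ge0 => j _; exact: sqr_ge0.
Qed.

Lemma GG_eq : GG = m2 ^+ 2 * F2 - 4 * m2 * (\sum_i rr i * pp i)
  + 2 * N%:R * (\sum_i pp i ^+ 2) + 2 * (\sum_i pp i) ^+ 2.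
Proof.
rewrite /GG.
rewrite (eq_bigr (fun i => \sum_(j < N) m2 ^+ 2 * W i j ^+ 2 + \sum_(j < N) (-2 * m2 * pp i) * W i j
     + \sum_(j < N) (-2 * m2) * (W i j * pp j) + \sum_(j < N) pp i ^+ 2 + \sum_(j < N) 2 * pp i * pp j
     + \sum_(j < N) pp j ^+ 2)); last first.
  move=> i _; rewrite -!big_split /=; apply: eq_bigr => j _; ring.
set P := \sum_(i < N) pp i.
rewrite !big_split /=.
have h1 : \sum_i \sum_(j < N) m2 ^+ 2 * W i j ^+ 2 = m2 ^+ 2 * F2.
  by rewrite /F2 mulr_sumr; apply: eq_bigr => i _; rewrite mulr_sumr.
have h2 : \sum_i \sum_(j < N) (-2 * m2 * pp i) * W i j = -2 * m2 * \sum_i rr i * pp i.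
  rewrite mulr_sumr; apply: eq_bigr => i _; rewrite -mulr_sumr -/(rr i); ring.
have h3 : \sum_i \sum_(j < N) (-2 * m2) * (W i j * pp j) = -2 * m2 * \sum_i rr i * pp i.
  rewrite exchange_big mulr_sumr; apply: eq_bigr => j _; rewrite /rr -mulr_sumr.
  congr (_ * _); rewrite mulr_suml; apply: eq_bigr => i _; by rewrite Wsym.
have h4 : \sum_i \sum_(j < N) pp i ^+ 2 = N%:R * \sum_i pp i ^+ 2.
  by rewrite mulr_sumr; apply: eq_bigr => i _; rewrite sum_cst.
have h5 : \sum_i \sum_(j < N) 2 * pp i * pp j = 2 * P ^+ 2.
  rewrite /P expr2 mulr_suml mulr_sumr; apply: eq_bigr => i _; rewrite !mulr_sumr.
  by apply: eq_bigr => j _; ring.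
have h6 : \sum_(i < N) \sum_(j < N) pp j ^+ 2 = N%:R * \sum_i pp i ^+ 2.
  by rewrite sum_cst.
rewrite h1 h2 h3 h4 h5 h6; ring.
Qed.

Lemma lin6 (c1 c2 c3 c4 c5 c6 : R) :
  \sum_i (c1 * rr i ^+ 2 + c2 * (dd i * rr i) + c3 * dd i ^+ 2 + c4 * rr i + c5 * dd i + c6)
  = c1 * A1 + c2 * A2 + c3 * A3 + c4 * ss + c5 * tt + N%:R * c6.
Proof. by rewrite !big_split /= -!mulr_sumr sum_cst. Qed.

Lemma T_ge0 (N4 : (4 <= N)%N) : 0 <= T (fun i j k l => ydelta R N i j k l).
Proof.
have e1 : (N - 1)%:R = N%:R - 1 :> R by rewrite natrB //; apply: leq_trans N4.
have e3 : (N - 3)%:R = N%:R - 3 :> R by rewrite natrB //; apply: leq_trans N4.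
have p3 : 0 < N%:R - 3 :> R by rewrite -e3 ltr0n subn_gt0.
have p2 : 0 < N%:R - 2 :> R by lra.
have p1 : 0 < N%:R - 1 :> R by lra.
have pn : 0 < N%:R :> R by rewrite ltr0n; apply: leq_trans N4.
have s1 : \sum_i rr i * pp i = m1 * A1 + (-m1) * A2 + 0 * A3 + (-(uu/2)) * ss + 0 * tt + N%:R * 0.
  by rewrite -lin6; apply: eq_bigr => i _; rewrite /pp; field.
have s2 : \sum_i pp i ^+ 2 = m1^+2 * A1 + (-2 * m1^+2) * A2 + m1^+2 * A3 + (-m1 * uu) * ss
   + (m1 * uu) * tt + N%:R * ((uu/2)^+2).
  by rewrite -lin6; apply: eq_bigr => i _; rewrite /pp; field.
have s3 : \sum_i pp i = 0 * A1 + 0 * A2 + 0 * A3 + m1 * ss + (-m1) * tt + N%:R * (-(uu/2)).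
  by rewrite -lin6; apply: eq_bigr => i _; rewrite /pp; field.
have s4 : DD = 4 * m1^+2 * A1 + (-4 * m1 * (m2 + 2 * m1)) * A2 + (m2 + 2 * m1)^+2 * A3
   + (-4 * m1 * uu) * ss + (2 * (m2 + 2 * m1) * uu) * tt + N%:R * uu^+2.
  by rewrite /DD -lin6; apply: eq_bigr => i _; rewrite /pp; field.
have key : T (fun i j k l => ydelta R N i j k l) * ((N%:R - 1) * (N%:R - 3)) =
   (N%:R - 3) / (N%:R - 1) * ((N%:R - 1) * tt - uu) ^+ 2
   + 2 * N%:R / ((N%:R - 2) * (N%:R - 1) ^+ 2) * (GG - DD).
  rewrite T_ydelta GG_eq s1 s2 s3 s4 /ca /cb e1 e3 /m1 /m2 /uu.
  field.
  by rewrite (gt_eqF p1) (gt_eqF p2) (gt_eqF p3).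
rewrite -(pmulr_lge0 _ (mulr_gt0 p1 p3)) key.
apply: addr_ge0; apply: mulr_ge0.
- by apply: divr_ge0; apply: ltW.
- exact: sqr_ge0.
- apply: divr_ge0; first by apply: mulr_ge0 => //; apply: ltW.
  by apply: mulr_ge0; [apply: ltW | apply: exprn_ge0; apply: ltW].
- exact: GD_ge0.
Qed.

End Terms.
End Q.

Section Fin.
Variable R : realFieldType.
Variable N : nat.

Lemma Yval_sym12 (a b c d : nat) : Yval R N a b c d = Yval R N b a c d.
Proof. by apply: Yval_perm => //; apply/seq.permP => p /=; rewrite addnCA. Qed.
Lemma Yval_sym34 (a b c d : nat) : Yval R N a b c d = Yval R N a b d c.
Proof. by apply: Yval_perm => //; apply/seq.permP => p /=; rewrite !addn0 [(p c + p d)%N]addnC. Qed.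
Lemma Yval_symP (a b c d : nat) : Yval R N a b c d = Yval R N c d a b.
Proof. by apply: Yval_perm; rewrite -[X in perm_eq X _]/([:: a; b] ++ [:: c; d]) perm_catC. Qed.

Lemma quad_ge0 (N4 : (4 <= N)%N) (v : 'cV[R]_(N * N)) : 0 <= (v^T *m Ymat R N *m v) 0 0.
Proof.
have N0 : (0 < N)%N by apply: leq_trans N4.
rewrite (quad_S4 N0) (symmetrize (Vof v) (y := fun i j k l : 'I_N => Yval R N i j k l)); last 2 first.
- by move=> i j k l; apply: Yval_sym12.
- by move=> i j k l; apply: Yval_sym34.
set W := fun i j => (Vof v i j + Vof v j i) / 2.
have Wsym : forall i j, W i j = W j i by move=> i j; rewrite /W addrC.
have := T_ge0 N0 Wsym N4.
rewrite /T; congr (_ <= _); apply: S4ext => i j k l.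
by rewrite Yval_delta.
Qed.
End Fin.


Theorem corollary6 (R : realFieldType) (N : nat) (hN : (4 <= N)%N) :
  pseudomoment4 (Ymat R N) /\ extends (Ymat R N) (Xmat R N).
Proof.
split; [split|].
- split.
    apply/matrixP => a b; rewrite !mxE; exact: Yval_symP.
  exact: quad_ge0.
- by move=> i j k k'; rewrite !Yent_val /Yval (odd_size_kk _ _ _ k').
- by move=> i; rewrite Yent_val Yval_zz eqxx.
- move=> f s; rewrite !Yent_val; apply: Yval_perm; exact: permLN.
- move=> o o0 i j; rewrite Yent_val Yval_zz !mxE.
  case: (eqVneq i j) => [->|h]; first by rewrite !eqxx /=; ring.
  have -> : (nat_of_ord i == nat_of_ord j) = false by exact: negbTE h.
  by rewrite /ca mulr0n mulr0 add0r.
Qed.
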